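(* Let $\mathrm{Gr}$ be the covering-space relative $\mathbb{Q}$-grading on $\widehat{HF}(-L(p,q))$. For $0\leq i<p$, $$\mathrm{Gr}(x_{i+q\!\!\mod p},x_i)={1\over p}(p-1-2i).$$
   Context: $p>q$ are relatively prime positive integers. $-L(p,q)$ has the pointed Heegaard diagram with $\Sigma$ the torus $[0,1]\times[0,1]$ with edges identified, $\alpha$ the horizontal circle $y=1/2$, $\beta$ a circle of slope $-p/q$, and $z$ a point below $y=1/2$. The $p$ regions are $D_0,\ldots,D_{p-1}$ left to right with $z\in D_0$, and the $p$ points of $\alpha\cap\beta$ are $x_0,\ldots,x_{p-1}$ left to right along $\alpha$, with $x_0$ the upper right vertex of $D_0$. The differential vanishes so $\widehat{CF}=\widehat{HF}(-L(p,q))$. $\mathrm{Gr}(\mathbf{x},\mathbf{y})=\frac1n\mathrm{gr}(\tilde{\mathbf{x}},\tilde{\mathbf{y}})$ for any $n$-fold cover on which the lifted generators have equal $\mathrm{Spin}^c$ structure; equivalently $\mathrm{Gr}(\mathbf{x},\mathbf{y})=\frac1n[e(A)+n_\mathbf{x}(A)+n_\mathbf{y}(A)]$ for any basepoint-avoiding domain $A$ with $\partial\partial_\alpha A=n\mathbf{y}-n\mathbf{x}$. *)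

(* Defs.v *)
(* Combinatorial model of the pointed Heegaard diagram of -L(p,q). *)
From mathcomp Require Import all_boot all_order all_algebra.
Set Implicit Arguments. Unset Strict Implicit. Unset Printing Implicit Defensive.
Import Order.TTheory GRing.Theory Num.Theory.
Local Open Scope ring_scope.

(* Indices of regions D_j and intersection points x_k are taken modulo p
   (only j, k in 0..p-1 are meaningful). A 2-chain (domain) is a function
   A : nat -> int, A j being the multiplicity of region D_(j mod p). *)

Definition dom_mult (p : nat) (A : nat -> int) (j : nat) : int := A (j %% p)%N.

(* Corners of the region D_j: its upper edge lies on alpha (region below alpha)
   from x_(j-1) to x_j, its lower edge lies on alpha (region above alpha)
   from x_(j+q-1) to x_(j+q). *)
Definition corners (p q j : nat) : seq nat :=
  [:: (j + p - 1) %% p; j %% p; (j + q + p - 1) %% p; (j + q) %% p]%N.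

(* Euler measure of a region = chi - (#convex corners)/4. *)
Definition euler_region (p q j : nat) : rat :=
  1 - (size (corners p q j))%:R / 4%:R.

Definition euler (p q : nat) (A : nat -> int) : rat :=
  \sum_(j < p) (dom_mult p A j)%:~R * euler_region p q j.

(* Local multiplicity n_x(D_j) at the point x_k: average over the 4 quadrants. *)
Definition npt_region (p q j k : nat) : rat :=
  (count (pred1 (k %% p)%N) (corners p q j))%:R / 4%:R.

Definition npt (p q : nat) (A : nat -> int) (k : nat) : rat :=
  \sum_(j < p) (dom_mult p A j)%:~R * npt_region p q j k.

(* Coefficient of the alpha-segment s_k = [x_(k-1), x_k] (oriented left to right)
   in the boundary of A: D_(k-q) lies above s_k, D_k lies below s_k. *)
Definition alpha_bdy (p q : nat) (A : nat -> int) (k : nat) : int :=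
  dom_mult p A (k + p - q)%N - dom_mult p A k.

(* Coefficient of x_m in the 0-chain  d(d_alpha A), using d s_k = x_k - x_(k-1). *)
Definition bdy0 (p q : nat) (A : nat -> int) (m : nat) : int :=
  \sum_(k < p) alpha_bdy p q A k *
     ((m %% p == k %% p)%N%:R - (m %% p == (k + p - 1) %% p)%N%:R).

(* A is basepoint-avoiding (z lies in D_0) and d(d_alpha A) = n y - n x. *)
Definition connecting_domain (p q : nat) (x y n : nat) (A : nat -> int) : Prop :=
  dom_mult p A 0 = 0 /\
  forall m, (m < p)%N ->
    bdy0 p q A m = (n%:Z) * ((m == y %% p)%N%:R - (m == x %% p)%N%:R).

Definition gr_value (p q : nat) (x y n : nat) (A : nat -> int) : rat :=
  (euler p q A + npt p q A x + npt p q A y) / n%:R.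

(* Main.v *)
Require Import Defs.
From mathcomp Require Import all_boot all_order all_algebra zify ring lra.
Import Order.TTheory GRing.Theory Num.Theory.
Local Open Scope ring_scope.

Lemma modE (p x v t : nat) : (v < p)%N -> x = (v + t * p)%N -> (x %% p = v)%N.
Proof. by move=> hv ->; rewrite addnC modnMDl modn_small. Qed.

Lemma modeqK (p j J a K : nat) : (j < p)%N -> (J < p)%N -> ((J + a) %% p = K)%N ->
  (((j + a) %% p == K) = (j == J))%N.
Proof.
move=> hj hJ <-; by rewrite eqn_modDr !modn_small.
Qed.

Lemma idx_sum (R : pzRingType) (p : nat) (F : nat -> R) (c : nat -> bool) (J : nat) :
  (J < p)%N -> (forall j, (j < p)%N -> c j = (j == J)) ->
  \sum_(j < p) F j * (c j)%:R = F J.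
Proof.
move=> hJ hc; rewrite (bigD1 (Ordinal hJ)) //= hc // eqxx mulr1 big1 ?addr0 // => j hj.
rewrite hc //; have -> : (j == J :> nat) = false.
  by apply/negbTE; move: hj; apply: contra => /eqP h; apply/eqP/val_inj.
by rewrite mulr0.
Qed.

Definition beta {R : pzRingType} (p q : nat) (D : nat -> R) (k : nat) : R :=
  D ((k + p - q) %% p)%N - D (k %% p)%N.

Lemma bdy_form (R : pzRingType) (p q : nat) (D : nat -> R) (m : nat) : (m < p)%N ->
  \sum_(k < p) (D ((k + p - q) %% p)%N - D (k %% p)%N) *
     ((m %% p == k %% p)%N%:R - (m %% p == (k + p - 1) %% p)%N%:R)
  = beta p q D m - beta p q D ((m + 1) %% p)%N.
Proof.
move=> hm; have hp : (0 < p)%N by lia.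
change (\sum_(k < p) beta p q D k * ((m %% p == k %% p)%N%:R - (m %% p == (k + p - 1) %% p)%N%:R) = beta p q D m - beta p q D ((m + 1) %% p)%N).
rewrite modn_small //.
under eq_bigr do rewrite mulrBr.
rewrite sumrB (@idx_sum _ p (beta p q D) (fun j => m == j %% p)%N m) //; last first.
  by move=> j hj; rewrite eq_sym modn_small.
rewrite (@idx_sum _ p (beta p q D) (fun j => m == (j + p - 1) %% p)%N ((m + 1) %% p)%N) ?ltn_pmod //.
move=> j hj; rewrite eq_sym -addnBA //.
apply: modeqK => //; first by rewrite ltn_pmod.
by rewrite modnDml; apply: (@modE _ _ _ 1) => //; lia.
Qed.

Lemma mod2 (p x : nat) : (x < p + p)%N -> (x %% p = if (x < p)%N then x else x - p)%N.
Proof.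
move=> h; case: ifP => hx; first by rewrite modn_small.
by apply: (@modE _ _ _ 1); lia.
Qed.

Lemma r_fact (p q r : nat) : (0 < q)%N -> (q < p)%N -> (r < p)%N ->
 ((r%:Z - ((r + (p-q))%%p)%N%:Z) - (((r+1)%%p)%N%:Z - ((r+1+(p-q))%%p)%N%:Z))
   = p%:Z * ((r == p-1)%N%:R - (r == q-1)%N%:R).
Proof.
move=> hq hqp hr.
rewrite (@mod2 p (r + (p-q))) ?(@mod2 p (r+1)) ?(@mod2 p (r+1+(p-q))); try lia.
case: ifP => h1; case: ifP => h2; case: ifP => h3; case: eqP => h4; case: eqP => h5; lia.
Qed.

Definition A0 (p i : nat) (k : nat) : int :=
  (p - 1 - i)%N%:Z - ((k + (p - 1 - i)) %% p)%N%:Z.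

Lemma exist_dom (p q i : nat) : (0 < q)%N -> (q < p)%N -> (i < p)%N ->
  connecting_domain p q ((i + q) %% p) i p (A0 p i).
Proof.
move=> hq hqp hi; split.
  by rewrite /dom_mult mod0n /A0 add0n modn_small ?subrr //; lia.
move=> m hm; rewrite /bdy0 /alpha_bdy /dom_mult.
rewrite (@bdy_form _ p q (A0 p i)) // /beta /A0.
set s := (p - 1 - i)%N.
have f1 : ((i + s) %% p = p - 1)%N by rewrite /s modn_small; lia.
have f2 : (((i + q) %% p + s) %% p = q - 1)%N.
  by rewrite modnDml; apply: (@modE _ _ _ 1); rewrite /s; lia.
have hiq : ((i + q) %% p < p)%N by rewrite ltn_pmod //; lia.
have hr : ((m + s) %% p < p)%N by rewrite ltn_pmod //; lia.
have e1 : ((m %% p + s) %% p = (m + s) %% p)%N by rewrite modnDml.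
have e2 : (((m + p - q) %% p + s) %% p = ((m + s) %% p + (p - q)) %% p)%N.
  by rewrite !modnDml; congr (_ %% p)%N; clear -hqp; lia.
have e3 : ((((m + 1) %% p) %% p + s) %% p = ((m + s) %% p + 1) %% p)%N.
  by rewrite modn_mod !modnDml; congr (_ %% p)%N; clear -hqp; lia.
have e4 : ((((m + 1) %% p + p - q) %% p + s) %% p = ((m + s) %% p + 1 + (p - q)) %% p)%N.
  rewrite -addnBA; last by clear -hqp; lia.
  rewrite modnDml -!addnA !modnDml; congr (_ %% p)%N; clear -hqp; lia.
rewrite e1 e2 e3 e4 (modn_small hi) modn_mod.
rewrite -(@modeqK p m i s (p - 1) hm hi f1) -(@modeqK p m _ s (q - 1) hm hiq f2) -r_fact //.
ring.
Qed.

Lemma bez_id (k p a q c : nat) : (1 + a * q = c * p)%N -> (k * (p - 1) * a * q + k * p = k * (p - 1) * c * p + k)%N.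
Proof. move=> H.
have -> : (k * (p - 1) * a * q = k * (p - 1) * (a * q))%N by rewrite !mulnA.
have -> : (k * (p - 1) * c * p = k * (p - 1) * (c * p))%N by rewrite !mulnA.
rewrite -H mulnDr muln1.
case: p H => [|p] H; first by rewrite muln0 in H.
rewrite subn1 /= mulnS; lia.
Qed.

Lemma homog (p q : nat) (D : nat -> rat) : (0 < q)%N -> (q < p)%N -> coprime p q -> D 0%N = 0 ->
  (forall m, (m < p)%N -> beta p q D m = beta p q D ((m + 1) %% p)%N) ->
  forall k, (k < p)%N -> D k = 0.
Proof.
move=> hq hqp hc h0 hb.
have hp : (0 < p)%N by lia.
have bc : forall m, (m < p)%N -> beta p q D m = beta p q D 0%N.
  elim=> [//|m IH] hm.
  rewrite -(IH (ltnW hm)) (hb m (ltnW hm)) addn1 modn_small //.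
have sum0 : \sum_(k < p) beta p q D k = 0.
  rewrite /beta sumrB.
  pose h (k : 'I_p) : 'I_p := Ordinal (ltn_pmod (k + p - q) hp).
  have hinj : injective h.
    move=> x y /(congr1 val) /= e; apply: val_inj => /=.
    move: e; rewrite -!addnBA; try by clear -hqp; lia.
    by move/eqP; rewrite eqn_modDr !modn_small // => /eqP.
  rewrite [X in _ - X](reindex_inj hinj) /=.
  by apply/eqP; rewrite subr_eq0; apply/eqP; apply: eq_bigr => k _; rewrite modn_mod.
have b0 : beta p q D 0%N = 0.
  move: sum0; rewrite (eq_bigr (fun _ => beta p q D 0%N)); last by move=> k _; exact: bc.
  rewrite sumr_const card_ord => /eqP; rewrite mulrn_eq0 => /orP [/eqP e|/eqP //].
  by rewrite e in hp.
have shift : forall k, (k < p)%N -> D ((k + p - q) %% p)%N = D k.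
  move=> k hk; apply/eqP; rewrite -subr_eq0; apply/eqP.
  by move: (bc k hk); rewrite b0 /beta (modn_small hk).
have orb : forall t, D ((t * q) %% p)%N = 0.
  elim=> [|t IH]; first by rewrite mul0n mod0n.
  rewrite -(shift _ (ltn_pmod _ hp)).
  have -> : (((t.+1 * q) %% p + p - q) %% p = (t * q) %% p)%N.
    rewrite -addnBA; last by clear -hqp; lia.
    rewrite modnDml mulSn.
    have -> : (q + t * q + (p - q) = 1 * p + t * q)%N by clear -hqp; lia.
    by rewrite modnMDl.
  exact: IH.
move=> k hk.
have [a ha hdiv] := Bezoutl q hp.
move: hdiv; rewrite (eqP hc) => /dvdnP [c hcp].
have e := @bez_id k p a q c hcp.
rewrite -(orb (k * (p - 1) * a)%N).
congr D.
by rewrite -(modnMDl k (k * (p - 1) * a * q) p) addnC e modnMDl modn_small.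
Qed.

Lemma euler0 p q A : euler p q A = 0.
Proof.
rewrite /euler /euler_region /=; apply: big1 => j _.
by rewrite divff ?subrr ?mulr0.
Qed.

Lemma count4 (K a b c d : nat) :
  count (pred1 K) [:: a; b; c; d] = ((a == K) + (b == K) + (c == K) + (d == K))%N.
Proof. by rewrite /= addn0 !addnA. Qed.

Lemma npt_eval (p q : nat) (A : nat -> int) (k J1 J2 J3 J4 : nat) :
  (0 < p)%N -> (J1 < p)%N -> (J2 < p)%N -> (J3 < p)%N -> (J4 < p)%N ->
  ((J1 + (p - 1)) %% p = k %% p)%N -> ((J2 + 0) %% p = k %% p)%N ->
  ((J3 + (q + (p - 1))) %% p = k %% p)%N -> ((J4 + q) %% p = k %% p)%N ->
  npt p q A k = ((A J1)%:~R + (A J2)%:~R + (A J3)%:~R + (A J4)%:~R) / 4%:R.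
Proof.
move=> hp h1 h2 h3 h4 e1 e2 e3 e4.
rewrite /npt /npt_region /corners /dom_mult.
under eq_bigr => j _ do rewrite count4 !natrD mulrA !mulrDr.
rewrite -mulr_suml !big_split /=.
pose F := fun j : nat => ((A (j %% p)%N)%:~R : rat).
rewrite (@idx_sum _ p F (fun j => (j + p - 1) %% p == k %% p)%N J1) //; last first.
  by move=> j hj; rewrite -addnBA //; apply: modeqK.
rewrite (@idx_sum _ p F (fun j => (j %% p) == k %% p)%N J2) //; last first.
  by move=> j hj; rewrite -[j in (j %% p)%N]addn0; apply: modeqK.
rewrite (@idx_sum _ p F (fun j => (j + q + p - 1) %% p == k %% p)%N J3) //; last first.
  by move=> j hj; rewrite -addnBA ?(leq_trans hp (leq_addl _ _)) // -addnA; apply: modeqK.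
rewrite (@idx_sum _ p F (fun j => (j + q) %% p == k %% p)%N J4) //; last first.
  by move=> j hj; apply: modeqK.
by rewrite /F !modn_small.
Qed.

Lemma modS (p x y t : nat) : x = (y + t * p)%N -> (x %% p = y %% p)%N.
Proof. by move=> ->; rewrite addnC modnMDl. Qed.

Theorem proposition5p3 (p q : nat) (hq : (0 < q)%N) (hqp : (q < p)%N)
  (hcop : coprime p q) (i : nat) (hi : (i < p)%N) :
  (exists (n : nat) (A : nat -> int),
      (0 < n)%N /\ connecting_domain p q ((i + q) %% p) i n A) /\
  (forall (n : nat) (A : nat -> int),
      (0 < n)%N -> connecting_domain p q ((i + q) %% p) i n A ->
      gr_value p q ((i + q) %% p) i n A = (p%:R - 1 - 2 * i%:R) / p%:R :> rat).
Proof.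
have hp : (0 < p)%N by lia.
have ex := @exist_dom p q i hq hqp hi.
split; first by exists p, (A0 p i); split.
move=> n A hn [hA0 hbd].
pose c : rat := n%:R / p%:R.
pose E := fun k => c * (A0 p i k)%:~R.
have key : forall k, (k < p)%N -> (A k)%:~R = E k.
  pose D := fun k => (A k)%:~R - E k.
  move=> k hk; apply/eqP; rewrite -subr_eq0; apply/eqP.
  apply: (@homog p q D hq hqp hcop _ _ k hk).
    rewrite /D /E; move: hA0 (ex.1); rewrite /dom_mult mod0n => -> ->.
    by rewrite mulr0 subr0.
  move=> m hm; apply/eqP; rewrite -subr_eq0; apply/eqP.
  have h1 := hbd m hm; have h2 := ex.2 m hm.
  rewrite /bdy0 /alpha_bdy /dom_mult (@bdy_form _ p q A m hm) in h1.
  rewrite /bdy0 /alpha_bdy /dom_mult (@bdy_form _ p q (A0 p i) m hm) in h2.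
  have -> : beta p q D m - beta p q D ((m + 1) %% p)%N =
     (beta p q A m - beta p q A ((m + 1) %% p)%N)%:~R -
     c * (beta p q (A0 p i) m - beta p q (A0 p i) ((m + 1) %% p)%N)%:~R.
    by rewrite /D /E /beta !intrB; ring.
  rewrite h1 h2 !intrM /c.
  have hp0 : (p%:Z)%:~R != 0 :> rat by rewrite intr_eq0; lia.
  rewrite -!pmulrn in hp0 *.
  by field.
set s := (p - 1 - i)%N.
have hiq : ((i + q) %% p < p)%N by rewrite ltn_pmod.
have hm : forall x, (x %% p < p)%N by move=> x; rewrite ltn_pmod.
have x1 : (((i + q + 1) %% p + (p - 1)) %% p = ((i + q) %% p) %% p)%N.
  by rewrite modn_mod modnDml; apply: (@modS _ _ _ 1); clear -hp; lia.
have x2 : (((i + q) %% p + 0) %% p = ((i + q) %% p) %% p)%N by rewrite addn0.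
have x3 : (((i + 1) %% p + (q + (p - 1))) %% p = ((i + q) %% p) %% p)%N.
  by rewrite modn_mod modnDml; apply: (@modS _ _ _ 1); clear -hp; lia.
have x4 : ((i + q) %% p = ((i + q) %% p) %% p)%N by rewrite modn_mod.
have y1 : (((i + 1) %% p + (p - 1)) %% p = i %% p)%N.
  by rewrite modnDml; apply: (@modS _ _ _ 1); clear -hp; lia.
have y2 : ((i + 0) %% p = i %% p)%N by rewrite addn0.
have y3 : (((i + 1 + (p - q)) %% p + (q + (p - 1))) %% p = i %% p)%N.
  by rewrite modnDml; apply: (@modS _ _ _ 2); clear -hp hqp; lia.
have y4 : (((i + (p - q)) %% p + q) %% p = i %% p)%N.
  by rewrite modnDml; apply: (@modS _ _ _ 1); clear -hp hqp; lia.
rewrite /gr_value euler0 add0r.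
rewrite (@npt_eval p q A _ _ _ _ _ hp (hm _) hiq (hm _) hi x1 x2 x3 x4).
rewrite (@npt_eval p q A _ _ _ _ _ hp (hm _) hi (hm _) (hm _) y1 y2 y3 y4).
rewrite !key ?hm // /E.
have g1 : (((i + q + 1) %% p + s) %% p = q)%N.
  by rewrite modnDml; apply: (@modE _ _ _ 1); rewrite /s; clear -hp hqp hi; lia.
have g2 : (((i + q) %% p + s) %% p = q - 1)%N.
  by rewrite modnDml; apply: (@modE _ _ _ 1); rewrite /s; clear -hp hqp hi hq; lia.
have g3 : (((i + 1) %% p + s) %% p = 0)%N.
  by rewrite modnDml; apply: (@modE _ _ _ 1); rewrite /s; clear -hp hqp hi hq; lia.
have g4 : ((i + s) %% p = p - 1)%N.
  by apply: (@modE _ _ _ 0); rewrite /s; clear -hp hqp hi hq; lia.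
have g5 : (((i + 1 + (p - q)) %% p + s) %% p = p - q)%N.
  by rewrite modnDml; apply: (@modE _ _ _ 1); rewrite /s; clear -hp hqp hi hq; lia.
have g6 : (((i + (p - q)) %% p + s) %% p = p - 1 - q)%N.
  by rewrite modnDml; apply: (@modE _ _ _ 1); rewrite /s; clear -hp hqp hi hq; lia.
have hsum : (A0 p i ((i + q + 1) %% p) + A0 p i ((i + q) %% p) + A0 p i ((i + 1) %% p)
   + A0 p i i + (A0 p i ((i + 1) %% p) + A0 p i i + A0 p i ((i + 1 + (p - q)) %% p)
   + A0 p i ((i + (p - q)) %% p)) = 4 * (p%:Z - 1 - 2 * i%:Z))%R.
  rewrite /A0 -/s g1 g2 g3 g4 g5 g6 /s; clear -hp hqp hi hq; lia.
move: hsum.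
move: (A0 p i ((i + q + 1) %% p)) => z1.
move: (A0 p i ((i + q) %% p)) => z2.
move: (A0 p i ((i + 1) %% p)) => z3.
move: (A0 p i i) => z4.
move: (A0 p i ((i + 1 + (p - q)) %% p)) => z5.
move: (A0 p i ((i + (p - q)) %% p)) => z6.
move=> /(congr1 (fun z : int => (z%:~R : rat))) /=.
rewrite !intrD !intrM !intrB !intrM ?rmorph1 => hs.
have -> : (z1%:~R : rat) = (z1%:~R + z2%:~R + z3%:~R + z4%:~R +
       (z3%:~R + z4%:~R + z5%:~R + z6%:~R)) - (z2%:~R + z3%:~R + z4%:~R + (z3%:~R + z4%:~R + z5%:~R + z6%:~R)).
  by ring.
rewrite hs.
rewrite /c -!pmulrn.
have hn0 : n%:R != 0 :> rat by rewrite pnatr_eq0; lia.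
have hp0 : p%:R != 0 :> rat by rewrite pnatr_eq0; lia.
field.
by rewrite hn0 hp0.
Qed.
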